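(* Let $n\in\mathbb{N}$ and let $R$ be a strongly $n$-torsion clean ring. Then: (1) $R$ is a PI-ring satisfying the polynomial identity $(x^n-1)((x-1)^n-1)=0$, i.e. $(r^n-1)((r-1)^n-1)=0$ for all $r\in R$; (2) $R$ has finite characteristic $\mathrm{char}(R)=|1\cdot\mathbb{Z}|$; (3) $J(R)$ is a nil ideal of index smaller than $(\mathrm{char}(R))^n$; (4) when $n$ is odd, $R$ is a reduced ring of characteristic $2$ and $J(R)=0$; (5) if $R$ is an algebra over a field $F$, then (i) $J(R)$ is a nil ideal of index at most $n$, and (ii) either $R$ is abelian or $\mathrm{char}(F)$ divides $n$.
   Context: All rings are associative with identity. $U(R)$ is the unit group, $J(R)$ the Jacobson radical, and $\mathrm{char}(R):=|1\cdot\mathbb{Z}|$ is the cardinality of the subring generated by $1$. A decomposition $r=e+u$ with $e^2=e$, $u\in U(R)$ and $u^n=1$ is an $n$-torsion clean decomposition of $r$; it is strongly $n$-torsion clean if moreover $eu=ue$. A ring $R$ is strongly $n$-torsion clean if every element of $R$ has a strongly $n$-torsion clean decomposition and $n$ is the smallest natural number with this property. A nil ideal $I$ is nil of index $k$ if $r^k=0$ for all $r\in I$ and $k$ is the minimal natural number with this property. A ring is abelian if all its idempotents are central, and reduced if it has no nonzero nilpotent elements. *)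

(* Defs.v *)
From mathcomp Require Import all_boot all_order all_algebra.
Set Implicit Arguments. Unset Strict Implicit. Unset Printing Implicit Defensive.
Import GRing.Theory.
Local Open Scope ring_scope.

Section Defs.
Variable R : nzRingType.

Definition is_unit (u : R) : Prop := exists v : R, u * v = 1 /\ v * u = 1.

Definition idem (e : R) : Prop := e * e = e.

Definition strongly_ntc_decomp (n : nat) (r : R) : Prop :=
  exists e u : R, [/\ idem e, is_unit u, u ^+ n = 1, e * u = u * e & r = e + u].

Definition strongly_ntc_ring (n : nat) : Prop :=
  [/\ (0 < n)%N,
      (forall r : R, strongly_ntc_decomp n r) &
      (forall m : nat, (0 < m)%N -> (forall r : R, strongly_ntc_decomp m r) -> (n <= m)%N)].

Definition left_ideal (I : R -> Prop) : Prop :=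
  [/\ I 0, (forall x y, I x -> I y -> I (x - y)) & (forall r x, I x -> I (r * x))].

Definition maximal_left_ideal (I : R -> Prop) : Prop :=
  [/\ left_ideal I, ~ I 1 &
      forall K : R -> Prop, left_ideal K -> (forall x, I x -> K x) ->
        (forall x, K x -> I x) \/ (forall x, K x)].

Definition jacobson (x : R) : Prop :=
  forall I : R -> Prop, maximal_left_ideal I -> I x.

Definition nil_of_index (I : R -> Prop) (k : nat) : Prop :=
  (forall r, I r -> r ^+ k = 0) /\
  (forall m : nat, (forall r, I r -> r ^+ m = 0) -> (k <= m)%N).

Definition char_is (c : nat) : Prop :=
  [/\ (0 < c)%N, (c%:R : R) = 0 &
      forall m : nat, (0 < m)%N -> (m%:R : R) = 0 -> (c <= m)%N].

Definition abelian_ring : Prop :=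
  forall e : R, idem e -> forall x : R, e * x = x * e.

Definition reduced_ring : Prop :=
  forall (x : R) (k : nat), x ^+ k = 0 -> x = 0.

End Defs.

(* Main.v *)
Require Import Defs.
From mathcomp Require Import all_boot all_order all_algebra.
From mathcomp Require classical_sets boolp.
From Stdlib Require Import Classical.
From mathcomp Require Import zify.
Import GRing.Theory.
Local Open Scope ring_scope.
Set Implicit Arguments. Unset Strict Implicit.

Section Aux.
Variable R : nzRingType.
Implicit Types x y a b e u : R.

Lemma corner_pow x a b : x * a = x * b -> a * x = x * a -> b * x = x * b ->
  forall k, x * a ^+ k = x * b ^+ k.
Proof.
move=> xab ax bx; elim=> [|k IH]; first by rewrite !expr0.
have cb : GRing.comm x (b ^+ k) by apply: commrX; rewrite /GRing.comm bx.
by rewrite !exprSr mulrA IH cb -mulrA xab mulrA -cb -mulrA.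
Qed.

Lemma unit_inv_comm e u v : u * v = 1 -> v * u = 1 -> e * u = u * e -> e * v = v * e.
Proof.
move=> uv vu eu.
by rewrite -[v * e]mulr1 -uv !mulrA -(mulrA v e u) eu !mulrA vu mul1r.
Qed.

Lemma pow_inv u v k : u * v = 1 -> v * u = 1 -> u ^+ k * v ^+ k = 1.
Proof.
move=> uv vu; elim: k => [|k IH]; first by rewrite !expr0 mulr1.
by rewrite exprSr exprS -mulrA (mulrA u) uv mul1r.
Qed.

Lemma nil_decomp x k e u : x ^+ k = 0 -> idem e -> is_unit u -> e * u = u * e ->
  x = e + u -> e = 1.
Proof.
move=> xk ide [v [uv vu]] eu xe.
have [f fdef] : exists f, f = 1 - e by eexists.
have fe : f * e = 0 by rewrite fdef mulrBl mul1r ide subrr.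
have ef : e * f = 0 by rewrite fdef mulrBr mulr1 ide subrr.
have fx : f * x = f * u by rewrite xe mulrDr fe add0r.
have uf : u * f = f * u by rewrite fdef mulrBl mulrBr mul1r mulr1 eu.
have xf : x * f = f * x by rewrite xe mulrDl mulrDr ef fe uf.
have := corner_pow fx xf uf k; rewrite xk mulr0 => h.
have : f = 0 by rewrite -[f]mulr1 -(pow_inv k uv vu) mulrA -h mul0r.
by move/eqP; rewrite fdef subr_eq0 => /eqP <-.
Qed.

Lemma coprime_one (u : R) (a b : nat) : (0 < a)%N -> coprime a b -> u ^+ a = 1 -> u ^+ b = 1 -> u = 1.
Proof.
move=> a0 cop ua ub.
case: (Bezoutl b a0) => x _ /dvdnP [q]; rewrite (eqP cop) => hq.
have : u ^+ (1 + x * b) = 1 by rewrite hq mulnC exprM ua expr1n.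
by rewrite exprD expr1 mulnC exprM ub expr1n mulr1.
Qed.

Lemma frob_iter p (pR : p \in [pchar R]) (x y : R) s : GRing.comm x y ->
  (x + y) ^+ (p ^ s) = x ^+ (p ^ s) + y ^+ (p ^ s).
Proof.
move=> cxy; elim: s => [|s IH]; first by rewrite !expn0 !expr1.
have c2 : GRing.comm (x ^+ (p ^ s)) (y ^+ (p ^ s)).
  by apply: commrX; apply/commr_sym; apply: commrX; apply/commr_sym.
by rewrite expnSr !exprM IH -!(pFrobenius_autE pR) pFrobenius_autD_comm.
Qed.

Lemma frobN1 p (pR : p \in [pchar R]) s : (-1 : R) ^+ (p ^ s) = -1.
Proof.
elim: s => [|s IH]; first by rewrite expn0 expr1.
by rewrite expnSr exprM IH -(pFrobenius_autE pR) pFrobenius_autN pFrobenius_aut1.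
Qed.

Lemma negpow (y : R) k : (- y) ^+ k = (-1) ^+ k * y ^+ k.
Proof.
by rewrite -(mulN1r y) exprMn_comm //; apply: commr_sym; apply: commrN1.
Qed.

End Aux.
Section Jac.
Variable R : nzRingType.

Lemma jac0 : jacobson (0 : R).
Proof. by move=> I [[]]. Qed.
Lemma jacB (x y : R) : jacobson x -> jacobson y -> jacobson (x - y).
Proof. by move=> jx jy I MI; case: (MI) => [[_ hB _] _ _]; apply: hB; [apply: jx|apply: jy]. Qed.
Lemma jacM (r x : R) : jacobson x -> jacobson (r * x).
Proof. by move=> jx I MI; case: (MI) => [[_ _ hM] _ _]; apply: hM; apply: jx. Qed.

Lemma jac_idem (f : R) : jacobson f -> idem f -> f = 0.
Proof.
move=> jf idf; apply: NNPP => fn0.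
pose e := 1 - f.
have ef : e * f = 0 by rewrite /e mulrBl mul1r idf subrr.
pose good (I : R -> Prop) := left_ideal I /\ I e /\ ~ I f.
pose T := {I : R -> Prop | good I}.
pose rl := fun (I J : T) => boolp.asbool (forall x, sval I x -> sval J x).
have B : good (fun x => exists r, x = r * e).
  split; [split|split].
  - by exists 0; rewrite mul0r.
  - by move=> x y [r ->] [s ->]; exists (r - s); rewrite mulrBl.
  - by move=> r x [s ->]; exists (r * s); rewrite mulrA.
  - by exists 1; rewrite mul1r.
  - move=> [r fr]; apply: fn0; by rewrite -idf {1}fr -mulrA ef mulr0.
have [M Mmax] : exists t : T, forall s, rl t s -> s = t.
  apply: classical_sets.Zorn.
  - by move=> t; apply/boolp.asboolP.
  - by move=> r s t /boolp.asboolP h1 /boolp.asboolP h2; apply/boolp.asboolP => x /h1 /h2.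
  - move=> [I gI] [J gJ] /boolp.asboolP h1 /boolp.asboolP h2 /=.
    have IJ : I = J.
      by apply: boolp.funext => x; apply: boolp.propext; split; [apply: h1|apply: h2].
    subst J; congr exist; apply: boolp.Prop_irrelevance.
  - move=> A Atot.
    case: (classic (exists t, A t)) => [[t0 At0]|nA]; last first.
      by exists (exist _ _ B) => s As; exfalso; apply: nA; exists s.
    pose U := fun x => exists t : T, A t /\ sval t x.
    have gU : good U.
      split; [split|split].
      + by exists t0; split => //; case: (svalP t0) => [[]].
      + move=> x y [[I gI] [AI Ix]] [[J gJ] [AJ Jy]].
        have [/boolp.asboolP h|/boolp.asboolP h] := Atot _ _ AI AJ.
        * exists (exist _ J gJ); split => //=; have [[_ hB _] _] := gJ; apply: hB => //; exact: h.
        * exists (exist _ I gI); split => //=; have [[_ hB _] _] := gI; apply: hB => //; exact: h.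
      + move=> r x [[I gI] [AI Ix]]; exists (exist _ I gI); split => //=.
        by have [[_ _ hM] _] := gI; apply: hM.
      + by exists t0; split => //; case: (svalP t0) => [_ []].
      + move=> [[I gI] [AI If]]; by have [_ [_ []]] := gI.
    exists (exist _ U gU) => s As; apply/boolp.asboolP => x sx; by exists s.
case: M Mmax => [M gM] Mmax; have [LM [Me Mf]] := gM.
have : maximal_left_ideal M.
  split => //.
  - move=> M1; apply: Mf; case: LM => [_ _ hM]; rewrite -[f]mulr1; exact: hM.
  - move=> K LK MK.
    case: (classic (K f)) => Kf.
      right => x; have K1 : K 1.
        case: LK => [K0 hB _]; have := hB _ _ (MK _ Me) (hB _ _ K0 Kf).
        by rewrite sub0r opprK /e subrK.
      by case: LK => [_ _ hM]; rewrite -[x]mulr1; apply: hM.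
    left => x Kx.
    have gK : good K by split => //; split => //; apply: MK.
    have := Mmax (exist _ K gK); rewrite /rl /=.
    move=> h; have /h [] : boolp.asbool (forall x, M x -> K x) by apply/boolp.asboolP.
    by move=> <-.
by move/jf.
Qed.
End Jac.

Lemma min_ex (P : nat -> Prop) N : P N -> exists k, P k /\ forall m, P m -> (k <= m)%N.
Proof.
move=> PN; have hex : exists m, boolp.asbool (P m) by exists N; apply/boolp.asboolP.
case: (ex_minnP hex) => k /boolp.asboolP Pk kmin; exists k; split => // m Pm.
by apply: kmin; apply/boolp.asboolP.
Qed.

Section Main.
Variables (R : nzRingType) (n : nat).
Hypothesis hR : strongly_ntc_ring R n.

Lemma n_gt0 : (0 < n)%N. Proof. by case: hR. Qed.
Lemma dec (r : R) : strongly_ntc_decomp n r. Proof. by case: hR => _ h _; apply: h. Qed.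

Lemma part1 (r : R) : (r ^+ n - 1) * ((r - 1) ^+ n - 1) = 0.
Proof.
have [e [u [ide uu un eu re]]] := dec r.
have [f fdef] : exists f, f = 1 - e by eexists.
have fe : f * e = 0 by rewrite fdef mulrBl mul1r ide subrr.
have ef : e * f = 0 by rewrite fdef mulrBr mulr1 ide subrr.
have uf : u * f = f * u by rewrite fdef mulrBl mulrBr mul1r mulr1 eu.
have fr : f * r = f * u by rewrite re mulrDr fe add0r.
have rf : r * f = f * r by rewrite re mulrDl mulrDr ef fe uf.
have A := corner_pow fr rf uf n; rewrite un mulr1 in A.
have er : e * (r - 1) = e * u by rewrite re mulrBr mulrDr ide mulr1 addrC addKr.
have re' : (r - 1) * e = e * (r - 1) by rewrite re !mulrBr !mulrBl !mulrDl !mulrDr ide mulr1 mul1r eu.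
have B := corner_pow er re' (esym eu) n; rewrite un mulr1 in B.
have cfr : GRing.comm f (r ^+ n) by apply: commrX; rewrite /GRing.comm rf.
have P1 : (r ^+ n - 1) * f = 0 by rewrite mulrBl mul1r -cfr A subrr.
have P2 : e * ((r - 1) ^+ n - 1) = 0 by rewrite mulrBr mulr1 B subrr.
have fe1 : f + e = 1 by rewrite fdef subrK.
have -> : (r ^+ n - 1) * ((r - 1) ^+ n - 1) = (r ^+ n - 1) * (f + e) * ((r - 1) ^+ n - 1).
  by rewrite fe1 mulr1.
by rewrite (mulrDr (r ^+ n - 1) f e) mulrDl P1 mul0r add0r -mulrA P2 mulr0.
Qed.

Lemma neg1n : (-1 : R) ^+ n = 1.
Proof.
have [e [u [ide uu un eu re]]] := dec 0.
have e1 := nil_decomp (expr1 (0 : R)) ide uu eu re.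
move: re; rewrite e1 => /eqP; rewrite eq_sym addr_eq0 => /eqP h.
have u1 : u = -1 by rewrite -[u]opprK -h.
by rewrite -u1.
Qed.

Lemma jac_e (j : R) : jacobson j -> (j - 1) ^+ n = 1.
Proof.
move=> jj; have [e [u [ide [v [uv vu]] un eu je]]] := dec j.
have [f fdef] : exists f, f = 1 - e by eexists.
have fe : f * e = 0 by rewrite fdef mulrBl mul1r ide subrr.
have uf : u * f = f * u by rewrite fdef mulrBl mulrBr mul1r mulr1 eu.
have fj : f = (v * f) * j by rewrite je -mulrA mulrDr fe add0r -uf mulrA vu mul1r.
have f0 : f = 0.
  apply: jac_idem; first by rewrite fj; apply: jacM.
  by rewrite /idem fdef mulrBr mulr1 mulrBl mul1r ide subrr subr0.
have e1 : e = 1 by move/eqP: f0; rewrite fdef subr_eq0 => /eqP <-.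
by rewrite je e1 (addrC 1 u) addrK.
Qed.

Lemma jac_cancel (a y : R) : jacobson y -> a * (y - 1) = 0 -> a = 0.
Proof.
move=> jy h; have := jac_e jy; have := n_gt0.
case: n => // m _; rewrite exprS => e.
by rewrite -[a]mulr1 -e mulrA h mul0r.
Qed.

Lemma jacX (y : R) k : jacobson y -> (0 < k)%N -> jacobson (y ^+ k).
Proof. by case: k => // k jy _; rewrite exprSr; apply: jacM. Qed.

Lemma char_ex : exists c, char_is R c.
Proof.
pose N := ((3 ^ n - 1) * (2 ^ n - 1))%N.
have n0 := n_gt0.
have N0 : (0 < N)%N.
  rewrite /N muln_gt0 !subn_gt0; apply/andP; split.
    exact: leq_ltn_trans n0 (ltn_expl _ (isT : (1 < 3)%N)).
  exact: leq_ltn_trans n0 (ltn_expl _ (isT : (1 < 2)%N)).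
have NR : (N%:R : R) = 0.
  have := part1 (3%:R).
  have -> : (3%:R : R) - 1 = 2%:R by rewrite -(natrB _ (isT : (1 <= 3)%N)).
  have e3 : forall m, (m.+1%:R : R) ^+ n - 1 = (m.+1 ^ n - 1)%:R.
    by move=> m; rewrite natrB ?expn_gt0 // natrX.
  by rewrite !e3 -natrM.
have hex : exists m, (0 < m)%N && ((m%:R : R) == 0) by exists N; rewrite N0 NR eqxx.
case: (ex_minnP hex) => c /andP [c0 /eqP cR] cmin.
exists c; split => // m m0 mR; apply: cmin; by rewrite m0 mR eqxx.
Qed.

Lemma char_gt1 c : char_is R c -> (1 < c)%N.
Proof.
case=> c0 cR _; rewrite ltn_neqAle c0 andbT; apply/negP => /eqP c1.
by move: cR; rewrite -c1 => /eqP; rewrite oner_eq0.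
Qed.

Lemma jac_nil c (j : R) : char_is R c -> jacobson j -> j ^+ (c ^ n - 1) = 0.
Proof.
move=> hc jj; have c1 := char_gt1 hc; case: hc => c0 cR _.
have n0 := n_gt0.
pose E (v : {ffun 'I_n -> 'I_c}) := \sum_(i < n) j ^+ i *+ v i.
have modc : forall (x : R) m, x *+ (m %% c) = x *+ m.
  move=> x m; rewrite {2}(divn_eq m c) mulrnDr mulrnA -(mulr_natr (x *+ (m %/ c)) c) cR mulr0 add0r //.
pose S y := exists v, E v = y.
have S0 : S 0.
  exists [ffun i => Ordinal c0]; rewrite /E big1 // => i _; by rewrite ffunE mulr0n.
have SD : forall a b, S a -> S b -> S (a + b).
  move=> a b [v <-] [w <-]; exists [ffun i => Ordinal (ltn_pmod (v i + w i) c0)].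
  rewrite /E -big_split /=; apply: eq_bigr => i _; by rewrite ffunE /= modc mulrnDr.
have SN : forall a, S a -> S (- a).
  move=> a [v <-]; exists [ffun i => Ordinal (ltn_pmod (c - v i) c0)].
  rewrite /E -sumrN; apply: eq_bigr => i _.
  by rewrite ffunE /= modc mulrnBr ?(ltnW (ltn_ord _)) // -(mulr_natr (j ^+ i) c) cR mulr0 sub0r.
have SM : forall a m, S a -> S (a *+ m).
  move=> a m Sa; elim: m => [|m IH]; first by rewrite mulr0n.
  by rewrite mulrS; apply: SD.
have Ssum : forall k (F : 'I_k -> R), (forall i, S (F i)) -> S (\sum_(i < k) F i).
  move=> k F h; apply: (big_ind S) => //.
have Spow : forall i, (i < n)%N -> S (j ^+ i).
  move=> i ilt; exists [ffun k : 'I_n => Ordinal (ltn_pmod (k == Ordinal ilt) c0)].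
  rewrite /E (bigD1 (Ordinal ilt)) //= big1 ?addr0.
    by rewrite ffunE /= modc eqxx mulr1n.
  by move=> k kne; rewrite ffunE /= modc (negbTE kne) mulr0n.
have Sjn : S (j ^+ n).
  have h := jac_e jj.
  rewrite (exprDn_comm _ (commrN1 j)) big_ord_recl /= subn0 expr0 mulr1 bin0 mulr1n in h.
  move: h; set T := \sum_(i < n) _ => h.
  have -> : j ^+ n = 1 - T by rewrite -h addrK.
  have Sjs : forall m k, (m < n)%N -> S (j ^+ m * (-1) ^+ k).
    move=> m k mlt; elim: k => [|k IH]; first by rewrite expr0 mulr1; apply: Spow.
    by rewrite exprS mulN1r mulrN; apply: SN.
  apply: SD; first by rewrite -(expr0 j); apply: Spow.
  apply: SN; apply: Ssum => i; apply: SM; apply: Sjs.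
  rewrite /bump leq0n add1n; lia.
have Smul : forall a, S a -> S (a * j).
  move=> a [v <-]; rewrite /E mulr_suml; apply: Ssum => i.
  rewrite mulrnAl -exprSr; apply: SM.
  have [ilt|ige] := ltnP i.+1 n; first exact: Spow.
  have -> : i.+1 = n by apply/eqP; rewrite eqn_leq ige ltn_ord.
  exact: Sjn.
have Sall : forall m, S (j ^+ m).
  elim=> [|m IH]; first by apply: Spow.
  by rewrite exprSr; apply: Smul.
have ex : forall m, exists v, E v == j ^+ m.
  by move=> m; have [v hv] := Sall m; exists v; rewrite hv.
pose f := fun (i : 'I_(c ^ n).+1) => xchoose (ex i).
have fE : forall i, E (f i) = j ^+ i by move=> i; apply/eqP; apply: (xchooseP (ex i)).
have ninj : ~ injective f.
  by move/leq_card; rewrite card_ffun !card_ord ltnn.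
have [a [b [fab anb]]] : exists a b, f a = f b /\ a <> b.
  apply: NNPP => H; apply: ninj => a b fab; apply: NNPP => anb; apply: H; exists a, b; by [].
have key : forall a b : nat, (a < b)%N -> (b <= c ^ n)%N -> j ^+ a = j ^+ b -> j ^+ (c ^ n - 1) = 0.
  move=> x y xy yc jxy.
  have jd : jacobson (j ^+ (y - x)) by apply: jacX => //; rewrite subn_gt0.
  have jx0 : j ^+ x = 0.
    apply: (jac_cancel jd); rewrite mulrBr mulr1 -exprD subnKC ?(ltnW xy) // jxy subrr //.
  have -> : (c ^ n - 1 = x + (c ^ n - 1 - x))%N by lia.
  by rewrite exprD jx0 mul0r.
have := congr1 E fab; rewrite !fE => jab.
case: (ltngtP a b) => h.
- by apply: (key a b) => //; rewrite -ltnS.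
- by apply: (key b a) => //; rewrite -ltnS.
- by exfalso; apply: anb; apply: val_inj.
Qed.

Lemma part4 c : odd n -> char_is R c -> c = 2%N /\ reduced_ring R.
Proof.
move=> hodd hc; have c1 := char_gt1 hc; have n0 := n_gt0.
have two0 : (1 + 1 : R) = 0.
  have := part1 0; rewrite expr0n sub0r -signr_odd hodd expr1.
  have -> : (n == 0%N) = false by apply/negbTE; rewrite -lt0n.
  by rewrite mulr0n sub0r mulN1r opprD !opprK.
split.
  case: hc => _ _ cmin; have := cmin 2%N isT two0; lia.
have m1 : (-1 : R) = 1 by apply/eqP; rewrite eq_sym -addr_eq0 two0.
move=> x k xk.
have [e [u [ide uu un eu xe]]] := dec x.
have e1 := nil_decomp xk ide uu eu xe.
have ux : u = x + 1 by rewrite xe e1 addrC addrA two0 add0r.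
have hp : forall m, (x + 1) ^+ (2 ^ m) = x ^+ (2 ^ m) + 1.
  elim=> [|m IH]; first by rewrite !expn0 !expr1.
  rewrite expnSr !exprM IH sqrrD1 mulr2n.
  set z := x ^+ (2 ^ m).
  have -> : z + z = z * (1 + 1) by rewrite mulrDr mulr1.
  by rewrite two0 mulr0 addr0.
have x2 : x ^+ (2 ^ k) = 0.
  have -> : (2 ^ k = k + (2 ^ k - k))%N by have := ltn_expl k (isT : (1 < 2)%N); lia.
  by rewrite exprD xk mul0r.
have u1 : u = 1.
  apply: (coprime_one (a := n) (b := 2 ^ k)) => //.
    by apply: coprimeXr; rewrite coprimen2.
  by rewrite ux hp x2 add0r.
by move: u1; rewrite ux => /(congr1 (fun t => t - 1)); rewrite addrK subrr.
Qed.

Lemma part5 (F : fieldType) (phi : {rmorphism F -> R}) :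
     (forall (a : F) (x : R), phi a * x = x * phi a) ->
     (exists k : nat, nil_of_index (@jacobson R) k /\ (k <= n)%N) /\
     (abelian_ring R \/ exists cF : nat, char_is F cF /\ (cF %| n)%N).
Proof.
move=> central; have n0 := n_gt0.
have [c hc] := char_ex; have c1 := char_gt1 hc; case: (hc) => c0 cR _.
have cF : (c%:R : F) == 0 by rewrite -(fmorph_eq0 phi) rmorph_nat cR.
have [p pF] := natf0_pchar c0 cF.
have pR : p \in [pchar R] by rewrite (fmorph_pchar phi).
have pp : prime p := pcharf_prime pF.
have p1 := prime_gt1 pp.
split.
  have [m' copm ndef] := pfactor_coprime pp n0.
  set q := (p ^ logn p n)%N in ndef.
  have q0 : (0 < q)%N by rewrite expn_gt0 prime_gt0.
  have m0 : (0 < m')%N by move: n0; rewrite ndef muln_gt0 => /andP [].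
  have Pq : forall j : R, jacobson j -> j ^+ q = 0.
    move=> j jj; have h := jac_e jj.
    have e1 : (j - 1) ^+ q = j ^+ q - 1.
      by rewrite frob_iter // ?frobN1 //; apply: commrN1.
    have jy : jacobson (j ^+ q) by apply: jacX.
    set y := j ^+ q in e1 jy *.
    have m1 : (-1 : R) ^+ m' = 1.
      by have := neg1n; rewrite ndef mulnC exprM frobN1.
    have hm : (1 - y) ^+ m' = 1.
      move: h; rewrite ndef mulnC exprM e1 => h.
      by rewrite -opprB negpow m1 mul1r.
    have ynil : y ^+ (p ^ (c ^ n)) = 0.
      have := jac_nil hc jy.
      have -> : (p ^ (c ^ n) = (c ^ n - 1) + (p ^ (c ^ n) - (c ^ n - 1)))%N.
        by have := ltn_expl (c ^ n) p1; lia.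
      by rewrite exprD => ->; rewrite mul0r.
    have hp : (1 - y) ^+ (p ^ (c ^ n)) = 1.
      rewrite frob_iter //; last by rewrite /GRing.comm mul1r mulr1.
      by rewrite expr1n negpow ynil mulr0 addr0.
    have cop : coprime m' (p ^ (c ^ n)) by rewrite coprime_sym coprimeXl.
    have h1 := coprime_one m0 cop hm hp.
    by rewrite -[y](subKr 1) h1 subrr.
  have [k [Pk kmin]] := @min_ex (fun m => forall r : R, jacobson r -> r ^+ m = 0) q Pq.
  exists k; split; first by split.
  apply: (leq_trans (kmin _ Pq)); apply: dvdn_leq => //; rewrite ndef dvdn_mull //.
case: (boolP (p %| n)%N) => pn.
  right; exists p; split => //; split; [exact: prime_gt0|exact: pcharf0|].
  by move=> m m0 mF; apply: dvdn_leq => //; rewrite (dvdn_pcharf pF) mF.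
left.
have nF : (n%:R : F) != 0 by rewrite -(dvdn_pcharf pF).
have key : forall e : R, idem e -> forall x : R, e * x * (1 - e) = 0.
  move=> e ide x.
  have h0 : (1 - e) * e = 0 by rewrite mulrBl mul1r ide subrr.
  set a := e * x * (1 - e).
  have aa : a * a = 0.
    by rewrite /a !mulrA -(mulrA _ (1 - e) e) h0 mulr0 !mul0r.
  have [g [u [idg uu un gu ag]]] := dec a.
  have a2 : a ^+ 2 = 0 by rewrite expr2.
  have g1 := nil_decomp a2 idg uu gu ag.
  have ua : u = a - 1 by rewrite ag g1 (addrC 1 u) addrK.
  have h1 : (1 - a) ^+ n = 1.
    have -> : 1 - a = (a - 1) * (-1) by rewrite mulrN1 opprB.
    by rewrite exprMn_comm ?neg1n ?mulr1 -?ua //; apply: commrN1.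
  have hk : forall k, (1 - a) ^+ k = 1 - a *+ k.
    elim=> [|k IH]; first by rewrite expr0 mulr0n subr0.
    rewrite exprSr IH mulrBr mulr1 mulrBl mul1r mulrnAl aa mul0rn subr0 mulrS.
    by rewrite opprD addrAC addrA.
  rewrite hk in h1.
  have an : (n%:R : R) * a = 0.
    rewrite mulr_natl; move: h1 => /(congr1 (fun t => 1 - t)).
    by rewrite subKr subrr => <-.
  have inv1 : phi (n%:R)^-1 * n%:R = 1 by rewrite -(rmorph_nat phi) -rmorphM mulVf ?rmorph1.
  by rewrite -[a]mul1r -inv1 -mulrA an mulr0.
move=> e ide x.
have ide' : idem (1 - e).
  by rewrite /idem mulrBr mulr1 mulrBl mul1r ide subrr subr0.
have k1 := key e ide x.
have k2 := key (1 - e) ide' x; rewrite subKr in k2.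
have -> : e * x = e * x * (e + (1 - e)) by rewrite addrC subrK mulr1.
have -> : x * e = (e + (1 - e)) * x * e by rewrite addrC subrK mul1r.
by rewrite mulrDr k1 addr0 (mulrDl e (1 - e) x) (mulrDl (e * x) ((1 - e) * x) e) k2 addr0.
Qed.

End Main.

Unset Implicit Arguments. Set Strict Implicit.

Theorem theorem2p4 (R : nzRingType) (n : nat) (hR : strongly_ntc_ring R n) :
  (* (1) *)
  (forall r : R, (r ^+ n - 1) * ((r - 1) ^+ n - 1) = 0) /\
  (* (2) finite characteristic c *)
  (exists c : nat, char_is R c /\
     (* (3) *)
     (exists k : nat, nil_of_index (@jacobson R) k /\ (k < c ^ n)%N) /\
     (* (4) *)
     (odd n -> [/\ reduced_ring R, c = 2%N & forall x : R, jacobson x -> x = 0])) /\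
  (* (5) R an algebra over a field F, given by a ring morphism with central image *)
  (forall (F : fieldType) (phi : {rmorphism F -> R}),
     (forall (a : F) (x : R), phi a * x = x * phi a) ->
     (exists k : nat, nil_of_index (@jacobson R) k /\ (k <= n)%N) /\
     (abelian_ring R \/ exists cF : nat, char_is F cF /\ (cF %| n)%N)).
Proof.
split; first exact: part1 hR.
split.
  have [c hc] := char_ex hR; exists c; split => //.
  have c1 := char_gt1 hc.
  have Pc : forall r : R, jacobson r -> r ^+ (c ^ n - 1) = 0.
    by move=> r jr; apply: (jac_nil hR hc jr).
  split.
    have [k [Pk kmin]] := @min_ex (fun m => forall r : R, jacobson r -> r ^+ m = 0) _ Pc.
    exists k; split; first by split.
    have := kmin _ Pc; have : (0 < c ^ n)%N by rewrite expn_gt0; lia.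
    lia.
  move=> hodd; have [c2 red] := part4 hR hodd hc; split => // x jx.
  exact: (red x _ (Pc x jx)).
exact: part5 hR.
Qed.
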